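(* Let $x,x'$ be two adjacent vertices of a graph $G$ and let $y,y'$ be two adjacent vertices of a graph $H$, where $G$ and $H$ are connected. If $X$ is a $\mu_t(G\,\Box\,H)$-set and $(x,y)\in X$, then $(x',y')\notin X$.
   Context: All graphs are finite, simple and undirected. The Cartesian product $G\,\Box\,H$ has vertex set $V(G)\times V(H)$, with $(x,y)$ adjacent to $(x',y')$ iff either $x=x'$ and $yy'\in E(H)$, or $xx'\in E(G)$ and $y=y'$. Let $F$ be a connected graph and $X\subseteq V(F)$. Two vertices $u,v\in V(F)$ are $X$-visible if there exists a shortest $u,v$-path in $F$ none of whose internal vertices belongs to $X$. $X$ is a total mutual-visibility set of $F$ if every two vertices of $F$ are $X$-visible (the empty set is allowed). $\mu_t(F)$ is the maximum cardinality of a total mutual-visibility set of $F$, and a $\mu_t(F)$-set is a total mutual-visibility set of that cardinality. *)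

(* Defs.v *)
From mathcomp Require Import all_boot.
Set Implicit Arguments. Unset Strict Implicit. Unset Printing Implicit Defensive.

Definition simple_graph (T : finType) (e : rel T) : Prop :=
  symmetric e /\ irreflexive e.

Definition connected_graph (T : finType) (e : rel T) : Prop :=
  forall u v : T, connect e u v.

Definition cart_prod (T1 T2 : finType) (e1 : rel T1) (e2 : rel T2) : rel (T1 * T2) :=
  fun a b => ((a.1 == b.1) && e2 a.2 b.2) || (e1 a.1 b.1 && (a.2 == b.2)).

(* A u,v-walk is encoded as the sequence p of vertices after u, so the
   walk is u :: p, it ends at last u p and has length size p. *)
Definition is_walk (T : finType) (e : rel T) (u v : T) (p : seq T) : bool :=
  path e u p && (last u p == v).

Definition shortest_path (T : finType) (e : rel T) (u v : T) (p : seq T) : Prop :=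
  is_walk e u v p /\ forall q : seq T, is_walk e u v q -> size p <= size q.

(* Internal vertices of the walk u :: p are the vertices of belast u p except u,
   i.e. the vertices of p except the last one. *)
Definition internal (T : finType) (u : T) (p : seq T) : seq T := behead (belast u p).

Definition visible (T : finType) (e : rel T) (X : {set T}) (u v : T) : Prop :=
  exists p : seq T, shortest_path e u v p /\ forall w, w \in internal u p -> w \notin X.

Definition total_mutual_visibility (T : finType) (e : rel T) (X : {set T}) : Prop :=
  forall u v : T, visible e X u v.

Definition mu_t_set (T : finType) (e : rel T) (X : {set T}) : Prop :=
  total_mutual_visibility e X /\
  forall Y : {set T}, total_mutual_visibility e Y -> #|Y| <= #|X|.

(* Main.v *)
Require Import Defs.
From mathcomp Require Import all_boot.

Theorem lemma5p8 (T1 T2 : finType) (e1 : rel T1) (e2 : rel T2)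
  (x x' : T1) (y y' : T2) (X : {set T1 * T2}) :
  simple_graph e1 -> simple_graph e2 ->
  connected_graph e1 -> connected_graph e2 ->
  e1 x x' -> e2 y y' ->
  mu_t_set (cart_prod e1 e2) X ->
  (x, y) \in X -> (x', y') \notin X.
Proof.
move=> [s1 i1] [s2 i2] _ _ exx eyy [tmv _] Hxy.
apply/negP => Hxy'.
have nx : x != x'.
  by apply/eqP => E; move: exx; rewrite E i1.
have ny : y != y'.
  by apply/eqP => E; move: eyy; rewrite E i2.
have [p [[Hw Hmin] Hint]] := tmv (x, y') (x', y).
have Hq : is_walk (cart_prod e1 e2) (x, y') (x', y) [:: (x, y); (x', y)].
  by rewrite /is_walk /= /cart_prod /= !eqxx /= (s2 y' y) eyy exx /= orbT.
have := Hmin _ Hq => /= Hs; clear Hmin.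
move: Hw Hint; rewrite /is_walk.
case: p Hs => [|w1 [|w2 [|w3 p]]] //= _.
- by rewrite xpair_eqE (negbTE nx).
- move=> /andP [/andP [He _] /eqP E]; subst w1; move: He.
  rewrite /cart_prod /= (negbTE nx) /= eq_sym (negbTE ny) andbF //.
- move=> /andP [/andP [He1 /andP [He2 _]] /eqP E] Hint; subst w2.
  have Hw1 : w1 \notin X by apply: Hint; rewrite /internal /= inE.
  clear Hint.
  case: w1 He1 He2 Hw1 => a b; rewrite /cart_prod /=.
  case/orP => [/andP [/eqP A B] | /andP [A /eqP B]];
    case/orP => [/andP [/eqP C D] | /andP [C /eqP D]]; subst;
    first [by rewrite eqxx in nx | by rewrite eqxx in ny
          | by rewrite Hxy | by rewrite Hxy'].
Qed.
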